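(* Let $M=(S,s_0,\mathbf{P})$ be a DTMC satisfying the standing assumptions below, let $p\in(0,1]$, and let \[\Theta=\{s_0s_1\cdots s_n\in \operatorname{Paths}_{\operatorname{fin}}(M)\mid s_n\in S_p \text{ and } s_i\notin S_p \text{ for all } i<n\}.\] Then $\Theta$ is a $p$-cause for $\lozenge \mathit{error}$ in $M$, $\Theta$ is a regular language (of finite words over the alphabet $S$), and $\Theta\preceq\Pi$ for every $p$-cause $\Pi$ for $\lozenge\mathit{error}$ in $M$.
   Context: A DTMC $M=(S,s_0,\mathbf{P})$ has a finite state set $S$, initial state $s_0\in S$, and transition function $\mathbf{P}\colon S\times S\to[0,1]$ with $\sum_{s'}\mathbf{P}(s,s')=1$ for all $s$. A finite path is a sequence $s_0s_1\cdots s_n$ starting in the initial state with $\mathbf{P}(s_i,s_{i+1})>0$ for all $i$; infinite paths are defined analogously; $\operatorname{Paths}_{\operatorname{fin}}(M)$ and $\operatorname{Paths}(M)$ denote these sets, $\operatorname{Pref}(\pi)$ the set of finite prefixes of a path $\pi$, and $\operatorname{last}(s_0\cdots s_n)=s_n$. The probability measure on infinite paths is the standard one generated by cylinder sets, with $\Pr(\operatorname{Cyl}(s_0\cdots s_n))=\prod_i\mathbf{P}(s_i,s_{i+1})$. $\Pr_s(\lozenge X)$ denotes the probability of eventually reaching the set $X$ when starting in state $s$. Standing assumptions: every state is reached from $s_0$ with positive probability; there are distinguished states $\mathit{error},\mathit{safe}\in S$ such that $\mathit{safe}$ is the (unique) state from which $\mathit{error}$ is not reachable, so $\Pr_{\mathit{safe}}(\lozenge\mathit{error})=0$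 and $\Pr_{s_0}(\lozenge\{\mathit{error},\mathit{safe}\})=1$. For $p\in(0,1]$ let $S_p=\{s\in S\mid \Pr_s(\lozenge\mathit{error})\ge p\}$. A finite path $\hat\pi$ is a $p$-critical prefix if $\Pr_{\operatorname{last}(\hat\pi)}(\lozenge\mathit{error})\ge p$ (this equals the conditional probability of $\lozenge\mathit{error}$ given the cylinder of $\hat\pi$). A set $\Pi$ of finite paths is prefix-free if for each $\hat\pi\in\Pi$ the only prefix of $\hat\pi$ in $\Pi$ is $\hat\pi$ itself. A $p$-cause for $\lozenge\mathit{error}$ in $M$ is a prefix-free set $\Pi\subseteq\operatorname{Paths}_{\operatorname{fin}}(M)$ such that (1) almost every infinite path that visits $\mathit{error}$ has a prefix in $\Pi$, and (2) every element of $\Pi$ is a $p$-critical prefix. For $p$-causes $\Pi,\Phi$ write $\Pi\preceq\Phi$ iff for every $\phi\in\Phi$ there is $\pi\in\Pi$ with $\pi\in\operatorname{Pref}(\phi)$. *)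

(* Defs.v *)
From HB Require Import structures.
From mathcomp Require Import all_boot all_order all_algebra.
From mathcomp Require Import classical_sets reals.
Set Implicit Arguments. Unset Strict Implicit. Unset Printing Implicit Defensive.
Import Order.TTheory GRing.Theory Num.Theory.
Local Open Scope ring_scope.

Section DTMC.
Variables (R : realType) (S : finType) (s0 : S) (P : S -> S -> R).

Definition edge : rel S := fun a b => 0 < P a b.

Definition is_fpath (w : seq S) : Prop :=
  match w with [::] => False | s :: t => s = s0 /\ path edge s t end.

Definition is_ipath (pi : nat -> S) : Prop :=
  pi 0%N = s0 /\ forall i, edge (pi i) (pi i.+1).

Fixpoint seqprob (s : S) (t : seq S) : R :=
  match t with [::] => 1 | x :: t' => P s x * seqprob x t' end.

Definition cylprob (w : seq S) : R :=
  match w with [::] => 1 | s :: t => seqprob s t end.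

Definition firsthit (X : pred S) (s : S) (t : seq S) : bool :=
  (last s t \in X) && all (fun x => x \notin X) (belast s t).

Definition reach_upto (X : pred S) (s : S) (n : nat) : R :=
  \sum_(k < n) \sum_(t : k.-tuple S)
     (if firsthit X s t then seqprob s t else 0).

(* Pr_s(<> X): measure of the (disjoint) union of the cylinders of the
   minimal finite paths from s reaching X *)
Definition reachprob (s : S) (X : pred S) : R :=
  sup (range (reach_upto X s)).

Definition ipref (pi : nat -> S) (n : nat) : seq S := mkseq pi n.

(* A set of infinite paths is null for the cylinder-generated measure:
   it can be covered by countably many cylinders of arbitrarily small
   total probability (outer measure 0). *)
Definition null_set (A : (nat -> S) -> Prop) : Prop :=
  forall eps : R, 0 < eps ->
    exists c : nat -> seq S,
      (forall pi, A pi -> exists n, ipref pi (size (c n)) = c n) /\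
      (forall N, \sum_(n < N) cylprob (c n) <= eps).

Definition prefix_free (Pi : seq S -> Prop) : Prop :=
  forall w v, Pi w -> Pi v -> prefix v w -> v = w.

Section Cause.
Variables (error : S) (p : R).

Definition Sp : pred S := fun s => p <= reachprob s (pred1 error).

Definition p_critical (w : seq S) : Prop :=
  is_fpath w /\ p <= reachprob (last s0 w) (pred1 error).

Definition p_cause (Pi : seq S -> Prop) : Prop :=
  (forall w, Pi w -> is_fpath w) /\
  prefix_free Pi /\
  null_set (fun pi => is_ipath pi /\ (exists i, pi i = error) /\
                      ~ (exists n, Pi (ipref pi n))) /\
  (forall w, Pi w -> p_critical w).

Definition Theta (w : seq S) : Prop :=
  is_fpath w /\
  match w with
  | [::] => False
  | s :: t => Sp (last s t) /\ (forall x, x \in belast s t -> ~~ Sp x)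
  end.

End Cause.

Definition cause_le (Pi Phi : seq S -> Prop) : Prop :=
  forall phi, Phi phi -> exists2 pi, Pi pi & prefix pi phi.

End DTMC.

Definition regular (A : finType) (L : seq A -> Prop) : Prop :=
  exists (Q : finType) (q0 : Q) (delta : Q -> A -> Q) (F : pred Q),
    forall w, L w <-> F (foldl delta q0 w).

(* Main.v *)
Require Import Defs.
From HB Require Import structures.
From mathcomp Require Import all_boot all_order all_algebra.
From mathcomp Require Import classical_sets reals.
Import Order.TTheory GRing.Theory Num.Theory.
Local Open Scope ring_scope.

Section Helpers.
Variables (R : realType) (S : finType) (s0 : S) (P : S -> S -> R).

Lemma reach_self_upto (e : S) n :
  reach_upto P (pred1 e) e n = (0 < n)%:R.
Proof.
case: n => [|n]; first by rewrite /reach_upto big_ord0.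
rewrite /reach_upto big_ord_recl /=.
rewrite [X in _ + X]big1 ?addr0; last first.
  move=> i _; apply: big1 => t _.
  case: t => [[|x t'] /= Ht]; first by [].
  by rewrite /firsthit /= !inE eqxx /= andbF.
rewrite (big_pred1 [tuple]) //.
  by rewrite /firsthit /= !inE eqxx.
by move=> t; rewrite /= (tuple0 t); apply/esym/eqP.
Qed.

Lemma reach_self (e : S) : reachprob P e (pred1 e) = 1.
Proof.
have Hr : range (reach_upto P (pred1 e) e) = [set x : R | x = 0 \/ x = 1]%classic.
  apply/seteqP; split => x /=.
    by case=> n _ <-; rewrite reach_self_upto; case: n => [|n]; [left|right].
  case=> ->; [exists 0%N | exists 1%N]; by rewrite // reach_self_upto.
rewrite /reachprob Hr.
apply/eqP; rewrite eq_le; apply/andP; split.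
  apply: ge_sup; first by exists 1; right.
  by move=> x [->|->]; rewrite ?ler01.
apply: sup_upper_bound; last by right.
split; first by exists 1; right.
by exists 1 => x [->|->]; rewrite ?ler01.
Qed.

Lemma first_hit (Q : pred S) t s : has Q (s :: t) ->
  exists2 t', prefix t' t & Q (last s t') && all (predC Q) (belast s t').
Proof.
elim: t s => [|x t IH] s /=.
  by rewrite orbF => Hs; exists [::]; rewrite /= ?Hs.
case Hs: (Q s) => /= H.
  by exists [::]; rewrite ?prefix0s //= Hs.
have [t' Ht' /andP[H1 H2]] := IH x H.
exists (x :: t'); first by rewrite eqxx.
by rewrite /= H1 /= Hs H2.
Qed.

Lemma mkseqSl (T : Type) (f : nat -> T) n :
  mkseq f n.+1 = f 0%N :: mkseq (fun k => f k.+1) n.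
Proof. rewrite /mkseq /= -[1%N]addn0 iotaDl -map_comp. reflexivity. Qed.

Lemma ipath_fpath pi n : is_ipath s0 P pi -> is_fpath s0 P (ipref pi n.+1).
Proof.
case=> H0 He; rewrite /ipref mkseqSl /=; split => //.
apply/(pathP s0) => i; rewrite size_mkseq => Hi.
rewrite nth_mkseq //.
case: i Hi => [|i] Hi /=; first exact: He.
by rewrite nth_mkseq 1?ltnW //; exact: He.
Qed.

Definition dstep (Q : pred S) (q : option (S * bool)) (b : S) :=
  match q with
  | None => Some (b, b == s0)
  | Some (x, ok) => Some (b, [&& ok, edge P x b & ~~ Q x])
  end.

Lemma fold_dstep Q t x ok : foldl (dstep Q) (Some (x, ok)) t =
  Some (last x t, [&& ok, path (edge P) x t & all (predC Q) (belast x t)]).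
Proof.
elim: t x ok => [|y t IH] x ok /=; first by rewrite !andbT.
rewrite IH; congr (Some (_, _)).
by case: ok; case: (edge P x y); case: (Q x); rewrite /= ?andbF.
Qed.

End Helpers.
Theorem proposition1 (R : realType) (S : finType) (s0 : S) (P : S -> S -> R)
  (error safe : S)
  (hP0 : forall s t, 0 <= P s t)
  (hP1 : forall s, \sum_(t : S) P s t = 1)
  (hreach : forall s, 0 < reachprob P s (pred1 s))
  (hsafe : forall s, (~~ connect (edge P) s error) = (s == safe))
  (hend : reachprob P s0 (fun s => (s == error) || (s == safe)) = 1)
  (p : R) (hp : 0 < p <= 1) :
  p_cause s0 P error p (Theta s0 P error p) /\
  regular (Theta s0 P error p) /\
  (forall Pi, p_cause s0 P error p Pi -> cause_le (Theta s0 P error p) Pi).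

Proof.
set Sp' := Sp P error p.
have key : forall w, is_fpath s0 P w -> has Sp' w ->
    exists2 v, Theta s0 P error p v & prefix v w.
  case=> [|s t] //= [Hs Hp] Hh.
  have [t' Ht' /andP[H1 H2]] := @first_hit _ Sp' t s Hh.
  exists (s :: t'); last by rewrite ?prefix_cons /= eqxx.
  split.
    split => //; move/prefixP: Ht' => [r Er]; move: Hp.
    by rewrite Er cat_path => /andP[].
  by split => // x Hx; exact: (allP H2 x Hx).
have Herr : Sp' error.
  by rewrite /Sp' /Sp reach_self; case/andP: hp.
have Hse : P safe error = 0.
  have := hsafe safe; rewrite eqxx => /negP Hc.
  apply/eqP; rewrite eq_le hP0 andbT leNgt; apply/negP => H.
  by apply: Hc; exact: connect1.
split; [split; [|split; [|split]] | split].
- by move=> w [].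
- move=> w v [Hw Tw] [Hv Tv] Hpre.
  case: w Hw Tw Hpre => [|s t] // _ [Ht1 Ht2].
  case: v Hv Tv => [|s' t'] // _ [Hv1 Hv2].
  rewrite prefix_cons => /andP[/eqP E Hpre]; subst s'.
  move/prefixP: Hpre => [[|y r] Er]; first by rewrite Er cats0.
  exfalso; move: (Ht2 (last s t')); rewrite Er belast_cat mem_cat /= in_cons eqxx orbT.
  by move=> /(_ isT); rewrite Hv1.
- move=> eps heps; exists (fun _ => [:: safe; error]); split.
    move=> pi [Hpi [[i Hi] Hno]]; exfalso; apply: Hno.
    have Hin : error \in ipref pi i.+1.
      by rewrite -Hi /ipref mkseqS mem_rcons mem_head.
    have Hh : has Sp' (ipref pi i.+1) by apply/hasP; exists error.
    have [v Tv Hpre] := key (ipref pi i.+1) (@ipath_fpath _ _ s0 P pi i Hpi) Hh.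
    exists (size v).
    have Hs := size_prefix Hpre; rewrite /ipref size_mkseq in Hs.
    move: Hpre; rewrite prefixE => /eqP E.
    suff -> : ipref pi (size v) = v by [].
    rewrite -[in RHS]E /ipref /mkseq -map_take take_iota.
    by rewrite (minn_idPl Hs).
  move=> N; rewrite big1 => [|n _]; first exact: ltW.
  by rewrite /= Hse mul0r.
- move=> w [Hw Tw]; split => //.
  by case: w Hw Tw => [|s t] // _ [H _].
- exists (option (S * bool)), None, (@dstep _ _ s0 P Sp'),
    (fun q => if q is Some (x, ok) then ok && Sp' x else false).
  case=> [|s t] /=; first by split => // [[]].
  rewrite (@fold_dstep _ _ s0 P); split.
    move=> [[-> Hp] [H1 H2]]; rewrite eqxx Hp /=; apply/andP; split; last exact: H1.
    by apply/allP => x /H2.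
  case/andP => /and3P[/eqP -> Hp Ha] H1; split => //; split => // x Hx.
  exact: (allP Ha x Hx).
- move=> Pi [_ [_ [_ Hc]]] phi /Hc [Hf Hl]; apply: key => //.
  case: phi Hf Hl => [|s t] // _ Hl.
  by apply/hasP; exists (last s t); [exact: mem_last | exact: Hl].
Qed.
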